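(* For each $n\ge1$ let $x_1,\dots,x_n\in\mathbb{R}^p$, induced points $u_1,\dots,u_s$ chosen from them, $\epsilon>0$ and a cutoff $\eta_{1,n}>0$, and define $\bar K,\bar Z,\bar\Lambda,\tilde K,\tilde Z,\tilde\Lambda$ as in the context. Suppose there is a constant $c_1\in(0,1)$ such that $\bar K_{i\cdot},\bar K_{\cdot i},\tilde K_{i\cdot},\tilde K_{\cdot i}\ge c_1n$ for all $1\le i\le n$ and all $n\ge1$. Then there exists a constant $C_1$ such that $$\|\bar Z\bar\Lambda^{-1}\bar Z^\top-\tilde Z\tilde\Lambda^{-1}\tilde Z^\top\|_2\le C_1\big(\exp(-\eta_{1,n}^2/(4\epsilon^2))+\eta_{2,n}/\epsilon\big),$$ where $\eta_{2,n}=\sup_{1\le i\le n}\|x_i-u_{\tau(i)}\|$.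
   Context: $\|\cdot\|_2$ is the spectral norm; $B_{i\cdot}=\sum_jB_{ij}$, $B_{\cdot j}=\sum_iB_{ij}$. Let $k(x,x')=\exp(-\|x-x'\|^2/(4\epsilon^2))$ and $k_{\eta_{1,n}}(x,x')=k(x,x')\mathbf 1_{\{\|x-x'\|<\eta_{1,n}\}}$. One-step: $\bar K_{ij}=k(x_i,x_j)$, $\bar A_{ij}=k(x_i,x_j)/(\bar K_{i\cdot}\bar K_{\cdot j})$, $\bar Z_{ij}=\bar A_{ij}/\bar A_{i\cdot}$, $\bar\Lambda=\mathrm{diag}(\bar Z_{\cdot i})$. For each $i$, $u_{\tau(i)}$ is the induced point nearest to $x_i$. $\tilde K_{ij}=k_{\eta_{1,n}}(x_i,u_{\tau(j)})$, $\tilde A_{ij}=\tilde K_{ij}/(\tilde K_{i\cdot}\tilde K_{\cdot j})$, $\tilde Z_{ij}=\tilde A_{ij}/\tilde A_{i\cdot}$, $\tilde\Lambda=\mathrm{diag}(\tilde Z_{\cdot i})$, all for $1\le i,j\le n$. *)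

(* Defs.v *)
From HB Require Import structures.
From mathcomp Require Import all_boot all_order all_algebra.
From mathcomp Require Import all_classical all_reals all_analysis.
Set Implicit Arguments. Unset Strict Implicit. Unset Printing Implicit Defensive.
Import Order.TTheory GRing.Theory Num.Theory.
Local Open Scope ring_scope.
Local Open Scope classical_set_scope.

Section Defs.
Variable R : realType.

Definition eucl_dist (p : nat) (x y : 'rV[R]_p) : R :=
  Num.sqrt (\sum_(k < p) (x 0 k - y 0 k) ^+ 2).

Definition gkern (eps : R) (p : nat) (x y : 'rV[R]_p) : R :=
  expR (- (eucl_dist x y) ^+ 2 / (4 * eps ^+ 2)).

Definition gkern_trunc (eps eta : R) (p : nat) (x y : 'rV[R]_p) : R :=
  if eucl_dist x y < eta then gkern eps x y else 0.

Definition rsum (n : nat) (B : 'M[R]_n) (i : 'I_n) : R := \sum_(j < n) B i j.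
Definition csum (n : nat) (B : 'M[R]_n) (j : 'I_n) : R := \sum_(i < n) B i j.

Definition Amat (n : nat) (K : 'M[R]_n) : 'M[R]_n :=
  \matrix_(i, j) (K i j / (rsum K i * csum K j)).
Definition Zmat (n : nat) (K : 'M[R]_n) : 'M[R]_n :=
  \matrix_(i, j) (Amat K i j / rsum (Amat K) i).
Definition Lmat (n : nat) (K : 'M[R]_n) : 'M[R]_n :=
  diag_mx (\row_i csum (Zmat K) i).
Definition ZLZ (n : nat) (K : 'M[R]_n) : 'M[R]_n :=
  Zmat K *m invmx (Lmat K) *m (Zmat K)^T.

Definition vnorm (n : nat) (v : 'cV[R]_n) : R :=
  Num.sqrt (\sum_(i < n) (v i 0) ^+ 2).
Definition spec_norm (n : nat) (M : 'M[R]_n) : R :=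
  sup [set r : R | exists v : 'cV[R]_n, vnorm v <= 1 /\ r = vnorm (M *m v)].

Definition Kbar (eps : R) (p n : nat) (x : 'I_n -> 'rV[R]_p) : 'M[R]_n :=
  \matrix_(i, j) gkern eps (x i) (x j).
Definition Ktil (eps eta : R) (p n s : nat) (x : 'I_n -> 'rV[R]_p)
  (u : 'I_s -> 'rV[R]_p) (tau : 'I_n -> 'I_s) : 'M[R]_n :=
  \matrix_(i, j) gkern_trunc eps eta (x i) (u (tau j)).

(* eta_2 = max_i ||x_i - u_{tau(i)}|| (a finite sup; 0 if n = 0). *)
Definition eta2 (p n s : nat) (x : 'I_n -> 'rV[R]_p)
  (u : 'I_s -> 'rV[R]_p) (tau : 'I_n -> 'I_s) : R :=
  \big[Num.max/0]_(i < n) eucl_dist (x i) (u (tau i)).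

End Defs.

(* Main.v *)
Require Import Defs.
From HB Require Import structures.
From mathcomp Require Import all_boot all_order all_algebra.
From mathcomp Require Import all_classical all_reals all_analysis.
From mathcomp Require Import ring lra.
Import Order.TTheory GRing.Theory Num.Theory.
Local Open Scope ring_scope.

Module Aux.
Set Implicit Arguments. Unset Strict Implicit.

Section Aux.
Variable R : realType.

Lemma cs_le (p : nat) (a b : 'I_p -> R) :
  \sum_k a k * b k <= Num.sqrt (\sum_k a k ^+ 2) * Num.sqrt (\sum_k b k ^+ 2).
Proof.
set A := \sum_k a k ^+ 2; set C := \sum_k b k ^+ 2.
have A0 : 0 <= A by apply: sumr_ge0 => k _; exact: sqr_ge0.
have C0 : 0 <= C by apply: sumr_ge0 => k _; exact: sqr_ge0.
set al := Num.sqrt A; set ga := Num.sqrt C.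
have al0 : 0 <= al by exact: sqrtr_ge0.
have ga0 : 0 <= ga by exact: sqrtr_ge0.
have alA : al ^+ 2 = A by exact: sqr_sqrtr.
have gaC : ga ^+ 2 = C by exact: sqr_sqrtr.
case: (eqVneq al 0) => [al_eq0|al_neq0].
  have A_eq0 : A = 0 by rewrite -alA al_eq0 expr0n.
  rewrite al_eq0 mul0r big1 // => k _.
  have := @psumr_eq0P R _ predT (fun k => a k ^+ 2) (fun k _ => sqr_ge0 (a k)) A_eq0 k isT.
  by move/eqP; rewrite sqrf_eq0 => /eqP ->; rewrite mul0r.
case: (eqVneq ga 0) => [ga_eq0|ga_neq0].
  have C_eq0 : C = 0 by rewrite -gaC ga_eq0 expr0n.
  rewrite ga_eq0 mulr0 big1 // => k _.
  have := @psumr_eq0P R _ predT (fun k => b k ^+ 2) (fun k _ => sqr_ge0 (b k)) C_eq0 k isT.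
  by move/eqP; rewrite sqrf_eq0 => /eqP ->; rewrite mulr0.
have algt : 0 < al by rewrite lt_def al_neq0.
have gagt : 0 < ga by rewrite lt_def ga_neq0.
have key : \sum_k (2 * al * ga) * (a k * b k) <= \sum_k (ga ^+ 2 * a k ^+ 2 + al ^+ 2 * b k ^+ 2).
  apply: ler_sum => k _.
  have := sqr_ge0 (ga * a k - al * b k); nra.
move: key; rewrite -mulr_sumr big_split /= -!mulr_sumr -/A -/C -alA -gaC => key.
have h2 : 0 < 2 * al * ga by apply: mulr_gt0 => //; apply: mulr_gt0.
have : (2 * al * ga) * (\sum_k a k * b k) <= (2 * al * ga) * (al * ga) by lra.
by rewrite ler_pM2l.
Qed.

Lemma mink (p : nat) (a b : 'I_p -> R) :
  Num.sqrt (\sum_k (a k + b k) ^+ 2) <= Num.sqrt (\sum_k a k ^+ 2) + Num.sqrt (\sum_k b k ^+ 2).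
Proof.
have A0 : 0 <= \sum_k a k ^+ 2 by apply: sumr_ge0 => k _; exact: sqr_ge0.
have C0 : 0 <= \sum_k b k ^+ 2 by apply: sumr_ge0 => k _; exact: sqr_ge0.
have S0 : 0 <= Num.sqrt (\sum_k a k ^+ 2) + Num.sqrt (\sum_k b k ^+ 2)
  by apply: addr_ge0; exact: sqrtr_ge0.
rewrite -(ger0_norm S0) -sqrtr_sqr ler_sqrt; last exact: sqr_ge0.
have -> : \sum_k (a k + b k) ^+ 2 = \sum_(k < p) a k ^+ 2 + 2 * (\sum_(k < p) a k * b k) + \sum_(k < p) b k ^+ 2.
  rewrite mulr_sumr -!big_split /=; apply: eq_bigr => k _; ring.
have := cs_le a b.
rewrite sqrrD !sqr_sqrtr //.
lra.
Qed.

Lemma dist_ge0 p (x y : 'rV[R]_p) : 0 <= eucl_dist x y.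
Proof. exact: sqrtr_ge0. Qed.

Lemma dist_sym p (x y : 'rV[R]_p) : eucl_dist x y = eucl_dist y x.
Proof. rewrite /eucl_dist; congr Num.sqrt; apply: eq_bigr => k _; ring. Qed.

Lemma dist_tri p (x y z : 'rV[R]_p) : eucl_dist x z <= eucl_dist x y + eucl_dist y z.
Proof.
rewrite /eucl_dist.
have := mink (fun k => x 0 k - y 0 k) (fun k => y 0 k - z 0 k).
congr (Num.sqrt _ <= _); apply: eq_bigr => k _; ring.
Qed.

Lemma dist_diff p (x y z : 'rV[R]_p) : `|eucl_dist x y - eucl_dist x z| <= eucl_dist y z.
Proof.
have := dist_tri x y z; have := dist_tri x z y; rewrite (dist_sym z y).
move=> h1 h2; rewrite ler_norml; apply/andP; split; lra.
Qed.

End Aux.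

Section Lip.
Variable R : realType.

Definition ff (e t : R) := expR (- t ^+ 2 / (4 * e ^+ 2)).

Lemma ff_gt0 e t : 0 < ff e t. Proof. exact: expR_gt0. Qed.
Lemma ff_le1 e t : ff e t <= 1.
Proof.
rewrite /ff expR_le1 mulNr oppr_le0; apply: mulr_ge0; first exact: sqr_ge0.
by rewrite invr_ge0; apply: mulr_ge0 => //; exact: sqr_ge0.
Qed.

Lemma ff_lip_le e a b : 0 < e -> 0 <= a -> a <= b -> ff e a - ff e b <= (b - a) / e.
Proof.
move=> e0 a0 ab.
set u := e^-1.
have u0 : 0 < u by rewrite invr_gt0.
have eu : e * u = 1 by rewrite mulfV // gt_eqF.
set h := b - a.
have h0 : 0 <= h by rewrite subr_ge0.
set fa := ff e a.
set y := h * (2 * a + h) * u ^+ 2 / 4.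
have y0 : 0 <= y.
  rewrite /y; apply: mulr_ge0 => //; apply: mulr_ge0; last exact: sqr_ge0.
  by apply: mulr_ge0 => //; lra.
have fb : ff e b = fa * expR (- y).
  rewrite /fa /ff -expRD; congr expR; rewrite /y /h /u; field.
  by rewrite gt_eqF.
rewrite fb.
have fa0 : 0 < fa by exact: ff_gt0.
have fa1 : fa <= 1 by exact: ff_le1.
have F20 : 0 < expR (- y) by exact: expR_gt0.
have F2y : 1 - expR (- y) <= y by have := expR_ge1Dx (- y); lra.
have faa : fa * a <= e.
  set E := expR (a ^+ 2 / (4 * e ^+ 2)).
  have faE : fa * E = 1.
    by rewrite /fa /E /ff -expRD mulNr addNr expR0.
  have E1 : 1 + a ^+ 2 / (4 * e ^+ 2) <= E by exact: expR_ge1Dx.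
  have E0 : 0 < E by exact: expR_gt0.
  have aE : a <= e * E.
    have : a <= e * (1 + a ^+ 2 / (4 * e ^+ 2)).
      have -> : e * (1 + a ^+ 2 / (4 * e ^+ 2)) = a + (2 * e - a) ^+ 2 / (4 * e).
        by field; rewrite gt_eqF.
      have : 0 <= (2 * e - a) ^+ 2 / (4 * e).
        by apply: mulr_ge0; [exact: sqr_ge0|rewrite invr_ge0; lra].
      lra.
    move=> h1; apply: (le_trans h1); rewrite ler_pM2l //.
  have : fa * a <= fa * (e * E) by rewrite ler_pM2l.
  by rewrite mulrCA faE mulr1.


case: (lerP 1 (h * u)) => hu.
  have : fa * expR (- y) > 0 by apply: mulr_gt0.
  lra.
have s1 : fa - fa * expR (- y) <= fa * y.
  have : fa * (1 - expR (- y)) <= fa * y by rewrite ler_pM2l.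
  lra.
apply: (le_trans s1).
have -> : fa * y = (fa * a) * (h * u ^+ 2) / 2 + fa * (h * u) ^+ 2 / 4.
  by rewrite /y; field.
have t1 : (fa * a) * (h * u ^+ 2) <= e * (h * u ^+ 2).
  apply: ler_wpM2r => //; apply: mulr_ge0 => //; exact: sqr_ge0.
have t1' : e * (h * u ^+ 2) = h * u.
  have -> : e * (h * u ^+ 2) = (e * u) * (h * u) by ring.
  by rewrite eu mul1r.
have hu0 : 0 <= h * u by apply: mulr_ge0 => //; exact: ltW.
have t2 : fa * (h * u) ^+ 2 <= (h * u) ^+ 2.
  have := sqr_ge0 (h * u); nra.
have t3 : (h * u) ^+ 2 <= h * u by rewrite expr2; nra.
lra.
Qed.

Lemma ff_lip e a b : 0 < e -> 0 <= a -> 0 <= b -> `|ff e a - ff e b| <= `|b - a| / e.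
Proof.
move=> e0 a0 b0.
case: (lerP a b) => ab.
  have h1 := ff_lip_le e0 a0 ab.
  have h2 : ff e b <= ff e a.
    rewrite /ff ler_expR ler_pM2r ?invr_gt0 ?mulr_gt0 ?exprn_gt0 // lerN2.
    by rewrite ler_sqr.
  by rewrite ger0_norm ?subr_ge0 // ger0_norm ?subr_ge0.
have ba := ltW ab.
have h1 := ff_lip_le e0 b0 ba.
have h2 : ff e a <= ff e b.
  rewrite /ff ler_expR ler_pM2r ?invr_gt0 ?mulr_gt0 ?exprn_gt0 // lerN2.
  by rewrite ler_sqr.
by rewrite (distrC (ff e a)) ger0_norm ?subr_ge0.
Qed.

End Lip.

Section Close.
Variable R : realType.
Implicit Types (x k s d a b : R).

Lemma eqle (a b : R) : a = b -> a <= b. Proof. by move->. Qed.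

Definition clos (X D a a' : R) := [/\ `|a| <= X, `|a'| <= X & `|a - a'| <= D].

Lemma cmul x1 k1 s1 x2 k2 s2 d a a' b b' :
  clos (x1 * s1) (k1 * d * s1) a a' -> clos (x2 * s2) (k2 * d * s2) b b' ->
  clos (x1 * x2 * (s1 * s2)) ((k1 * x2 + x1 * k2) * d * (s1 * s2)) (a * b) (a' * b').
Proof.
case=> ha ha' hd1 [hb hb' hd2].
have X10 : 0 <= x1 * s1 by exact: le_trans (normr_ge0 _) ha.
have X20 : 0 <= x2 * s2 by exact: le_trans (normr_ge0 _) hb.
have E1 : x1 * x2 * (s1 * s2) = (x1 * s1) * (x2 * s2) by ring.
have E2 : (k1 * x2 + x1 * k2) * d * (s1 * s2) = (k1 * d * s1) * (x2 * s2) + (x1 * s1) * (k2 * d * s2) by ring.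
rewrite E1 E2; split.
- by rewrite normrM; apply: ler_pM.
- by rewrite normrM; apply: ler_pM.
have -> : a * b - a' * b' = (a - a') * b + a' * (b - b') by ring.
apply: (le_trans (ler_normD _ _)); apply: lerD; rewrite normrM; apply: ler_pM => //.
Qed.

Lemma csum_close n x k s d (F F' : 'I_n -> R) :
  (forall i, clos (x * s) (k * d * s) (F i) (F' i)) ->
  clos (x * (n%:R * s)) (k * d * (n%:R * s)) (\sum_i F i) (\sum_i F' i).
Proof.
move=> h.
have bnd : forall G : 'I_n -> R, (forall i, `|G i| <= k * d * s) ->
    `|\sum_i G i| <= k * d * (n%:R * s).
  move=> G hG; apply: (le_trans (ler_norm_sum _ _ _)).
  apply: (le_trans (ler_sum _ (fun i _ => hG i))).
  by rewrite sumr_const card_ord -mulr_natr; apply: eqle; ring.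
have bnd2 : forall G : 'I_n -> R, (forall i, `|G i| <= x * s) ->
    `|\sum_i G i| <= x * (n%:R * s).
  move=> G hG; apply: (le_trans (ler_norm_sum _ _ _)).
  apply: (le_trans (ler_sum _ (fun i _ => hG i))).
  by rewrite sumr_const card_ord -mulr_natr; apply: eqle; ring.
split.
- by apply: bnd2 => i; case: (h i).
- by apply: bnd2 => i; case: (h i).
rewrite -sumrB; apply: bnd => i; by case: (h i).
Qed.

Lemma cinv l k s d a a' :
  0 < l * s -> l * s <= a -> l * s <= a' -> `|a - a'| <= k * d * s ->
  clos (l^-1 * s^-1) ((k / l ^+ 2) * d * s^-1) a^-1 a'^-1.
Proof.
move=> L0 ha ha' hd.
have a0 : 0 < a by exact: lt_le_trans ha.
have a0' : 0 < a' by exact: lt_le_trans ha'.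
have l0 : l != 0 by apply/eqP => l0; move: L0; rewrite l0 mul0r ltxx.
have s0 : s != 0 by apply/eqP => s0; move: L0; rewrite s0 mulr0 ltxx.
have E : l^-1 * s^-1 = (l * s)^-1 by rewrite invfM.
split.
- rewrite E ger0_norm; last by rewrite invr_ge0 ltW.
  by rewrite lef_pV2 ?posrE.
- rewrite E ger0_norm; last by rewrite invr_ge0 ltW.
  by rewrite lef_pV2 ?posrE.
have -> : a^-1 - a'^-1 = (a' - a) / (a * a') by field; rewrite ?gt_eqF.
rewrite normrM distrC (ger0_norm (_ : 0 <= (a * a')^-1)); last by rewrite invr_ge0 ltW ?mulr_gt0.
have -> : k / l ^+ 2 * d * s^-1 = (k * d * s) / ((l * s) * (l * s)) by field; rewrite ?l0 ?s0 ?andbT.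
apply: ler_pM => //; first by rewrite invr_ge0 ltW ?mulr_gt0.
have LL : 0 < (l * s) * (l * s) by exact: mulr_gt0.
have AA : 0 < a * a' by exact: mulr_gt0.
rewrite lef_pV2 ?posrE //.
by apply: ler_pM => //; apply: ltW.
Qed.

Lemma close_diff X D a a' : clos X D a a' -> `|a - a'| <= D.
Proof. by case. Qed.

Lemma close_scale X D X' D' a a' : clos X D a a' -> X = X' -> D = D' -> clos X' D' a a'.
Proof. by move=> h <- <-. Qed.

End Close.

Section Mat.
Variable R : realType.

Lemma invmx_diag n (dv : 'rV[R]_n) : (forall k, dv 0 k != 0) ->
  invmx (diag_mx dv) = diag_mx (\row_k (dv 0 k)^-1).
Proof.
move=> h.
have E : diag_mx dv *m diag_mx (\row_k (dv 0 k)^-1) = 1%:M.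
  rewrite mulmx_diag -diag_const_mx; congr diag_mx; apply/rowP => k.
  by rewrite !mxE divff.
have [U _] := mulmx1_unit E.
by rewrite -[RHS]mul1mx -(mulVmx U) -mulmxA E mulmx1.
Qed.

Lemma ZLZ_E n (K : 'M[R]_n) : (forall k, csum (Zmat K) k != 0) ->
  forall i j, ZLZ K i j = \sum_k Zmat K i k * (csum (Zmat K) k)^-1 * Zmat K j k.
Proof.
move=> h i j.
rewrite /ZLZ /Lmat invmx_diag; last by move=> k; rewrite mxE.
rewrite mul_mx_diag mxE; apply: eq_bigr => k _; by rewrite !mxE.
Qed.

Lemma vnorm_bound n (M : 'M[R]_n) m : (forall i j, `|M i j| <= m) ->
  spec_norm M <= n%:R * m.
Proof.
move=> hM.
have Nm0 : 0 <= n%:R * m.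
  case: n M hM => [|n] M hM; first by rewrite mul0r.
  apply: mulr_ge0 => //; exact: le_trans (normr_ge0 _) (hM ord0 ord0).
apply: ge_sup.
  have v0 : vnorm (0 : 'cV[R]_n) = 0.
    by rewrite /vnorm big1 ?sqrtr0 // => i _; rewrite mxE expr0n.
  by exists 0, 0; rewrite mulmx0 v0.

move=> r [v [hv ->]].
set S := \sum_(i < n) v i 0 ^+ 2.
have S0 : 0 <= S by apply: sumr_ge0 => i _; exact: sqr_ge0.
have S1 : S <= 1.
  rewrite -(sqr_sqrtr S0) -(expr1n R 2) ler_sqr ?nnegrE ?sqrtr_ge0 //.
set T := \sum_(j < n) `|v j 0|.
have T0 : 0 <= T by apply: sumr_ge0.
have T2 : T ^+ 2 <= n%:R.
  have := cs_le (fun _ : 'I_n => 1) (fun j => `|v j 0|).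
  under eq_bigr do rewrite mul1r.
  rewrite -/T.
  have -> : \sum_(k < n) (1 : R) ^+ 2 = n%:R by rewrite expr1n sumr_const card_ord.
  rewrite (eq_bigr (fun k => v k 0 ^+ 2)); last by move=> k _; rewrite real_normK ?num_real.
  rewrite -/S => h.
  have h2 : T ^+ 2 <= (Num.sqrt n%:R * Num.sqrt S) ^+ 2.
    by rewrite ler_sqr ?nnegrE // mulr_ge0 ?sqrtr_ge0.
  apply: (le_trans h2); rewrite exprMn !sqr_sqrtr //.
  by rewrite -[X in _ <= X]mulr1 ler_wpM2l.
have hi : forall i, ((M *m v) i 0) ^+ 2 <= m ^+ 2 * n%:R.
  move=> i.
  have a1 : `|(M *m v) i 0| <= m * T.
    rewrite mxE; apply: (le_trans (ler_norm_sum _ _ _)).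
    rewrite /T mulr_sumr; apply: ler_sum => j _; rewrite normrM.
    by apply: ler_wpM2r.
  have m0 : 0 <= m by exact: le_trans (normr_ge0 _) (hM i i).
  rewrite -real_normK ?num_real //.
  apply: (le_trans (_ : _ <= (m * T) ^+ 2)).
    by rewrite ler_sqr ?nnegrE ?mulr_ge0.
  by rewrite exprMn ler_wpM2l ?sqr_ge0.
rewrite /vnorm -(ger0_norm Nm0) -sqrtr_sqr ler_sqrt; last exact: sqr_ge0.
apply: (le_trans (ler_sum _ (fun i _ => hi i))).
by rewrite sumr_const card_ord -mulr_natr; apply: eqle; ring.
Qed.

End Mat.

Section Pert.
Variable R : realType.

Lemma AmatE n (K : 'M[R]_n) i j : Amat K i j = K i j * (rsum K i * csum K j)^-1.
Proof. by rewrite mxE. Qed.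
Lemma ZmatE n (K : 'M[R]_n) i j : Zmat K i j = Amat K i j * (rsum (Amat K) i)^-1.
Proof. by rewrite mxE. Qed.

Definition goodK n (K : 'M[R]_n) (c : R) :=
  (forall i j, 0 <= K i j <= 1) /\
  (forall i, c * n%:R <= rsum K i /\ c * n%:R <= csum K i).

Lemma Kfacts n (K : 'M[R]_n) c : (0 < n)%N -> 0 < c -> goodK K c ->
  (forall i, n%:R^-1 <= rsum (Amat K) i) /\ (forall k, c <= csum (Zmat K) k).
Proof.
move=> n0 c0 [hK hS].
have N0 : 0 < n%:R :> R by rewrite ltr0n.
have rN : forall i, rsum K i <= n%:R.
  move=> i; rewrite /rsum -[n in n%:R]card_ord -sumr_const; apply: ler_sum => j _.
  by case/andP: (hK i j).
have cN : forall i, csum K i <= n%:R.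
  move=> i; rewrite /csum -[n in n%:R]card_ord -sumr_const; apply: ler_sum => j _.
  by case/andP: (hK j i).
have r0 : forall i, 0 < rsum K i.
  by move=> i; apply: lt_le_trans (proj1 (hS i)); apply: mulr_gt0.
have cc0 : forall i, 0 < csum K i.
  by move=> i; apply: lt_le_trans (proj2 (hS i)); apply: mulr_gt0.
have K0 : forall i j, 0 <= K i j by move=> i j; case/andP: (hK i j).
have alow : forall i, n%:R^-1 <= rsum (Amat K) i.
  move=> i.
  have -> : n%:R^-1 = \sum_j K i j * (rsum K i * n%:R)^-1.
    rewrite -mulr_suml -/(rsum K i); field.
    by rewrite !gt_eqF.
  apply: ler_sum => j _; rewrite AmatE; apply: ler_wpM2l => //.
  rewrite lef_pV2 ?posrE ?mulr_gt0 //.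
  by rewrite ler_pM2l.
have aup : forall i, rsum (Amat K) i <= (c * n%:R)^-1.
  move=> i.
  have -> : (c * n%:R)^-1 = \sum_j K i j * (rsum K i * (c * n%:R))^-1.
    rewrite -mulr_suml -/(rsum K i); field.
    by rewrite !gt_eqF.
  apply: ler_sum => j _; rewrite AmatE; apply: ler_wpM2l => //.
  rewrite lef_pV2 ?posrE ?mulr_gt0 //.
  by rewrite ler_pM2l //; case: (hS j).
split => // k.
have a0 : forall i, 0 < rsum (Amat K) i.
  by move=> i; apply: lt_le_trans (alow i); rewrite invr_gt0.
have zlow : forall j, K j k * c / csum K k <= Zmat K j k.
  move=> j; rewrite ZmatE AmatE.
  have h1 : c * n%:R <= (rsum (Amat K) j)^-1.
    by rewrite -[c * n%:R]invrK lef_pV2 ?posrE ?invr_gt0 ?mulr_gt0.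
  have h2 : K j k * (rsum K j * csum K k)^-1 * (c * n%:R) <=
            K j k * (rsum K j * csum K k)^-1 * (rsum (Amat K) j)^-1.
    apply: ler_wpM2l => //; apply: mulr_ge0 => //.
    by rewrite invr_ge0 ltW ?mulr_gt0.
  apply: le_trans h2.
  have -> : K j k * (rsum K j * csum K k)^-1 * (c * n%:R) =
     (K j k * c / csum K k) * (n%:R / rsum K j).
    by field; rewrite !gt_eqF.
  apply: ler_peMr.
    apply: mulr_ge0; last by rewrite invr_ge0 ltW.
    by apply: mulr_ge0 => //; apply: ltW.
  by rewrite ler_pdivlMr // mul1r.
apply: le_trans (ler_sum _ (fun j _ => zlow j)).
rewrite -mulr_suml -mulr_suml -/(csum K k).
apply: eqle; field; by rewrite gt_eqF.
Qed.

End Pert.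

Section Pert2.
Variable R : realType.

Lemma close_rw (X D a a' b b' : R) : clos X D a a' -> b = a -> b' = a' -> clos X D b b'.
Proof. by move=> h -> ->. Qed.

Lemma fin_step (k d s N : R) : s = N^-1 -> k * d * s <= k * d / N.
Proof. by move->. Qed.

Lemma pert (c : R) : 0 < c -> exists C : R, forall n (K K' : 'M[R]_n) (d : R),
  (0 < n)%N -> 0 <= d -> goodK K c -> goodK K' c ->
  (forall i j, `|K i j - K' i j| <= d) ->
  forall i j, `|ZLZ K i j - ZLZ K' i j| <= C * d / n%:R.
Proof.
move=> c0; eexists => n K K' d n0 d0 gK gK' hd i j.
have N0 : 0 < n%:R :> R by rewrite ltr0n.
have NN : n%:R != 0 :> R by rewrite gt_eqF.
have [aK LK] := Kfacts n0 c0 gK.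
have [aK' LK'] := Kfacts n0 c0 gK'.
case: gK => hK hS; case: gK' => hK' hS'.
have hKc : forall i j, clos (1 * 1) (1 * d * 1) (K i j) (K' i j).
  move=> i0 j0; split; rewrite ?mulr1 ?mul1r //.
    by case/andP: (hK i0 j0) => a b; rewrite ger0_norm.
  by case/andP: (hK' i0 j0) => a b; rewrite ger0_norm.
have hr := fun i0 => csum_close (fun j0 => hKc i0 j0).
have hc := fun j0 => csum_close (fun i0 => hKc i0 j0).
have hP := fun i0 j0 => cmul (hr i0) (hc j0).
have L0 : 0 < c * c * ((n%:R * 1) * (n%:R * 1)) :> R.
  by rewrite !mulr1; apply: mulr_gt0; apply: mulr_gt0.
have lowP : forall (M : 'M[R]_n), (forall i, c * n%:R <= rsum M i /\ c * n%:R <= csum M i) ->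
   forall i0 j0, c * c * ((n%:R * 1) * (n%:R * 1)) <= rsum M i0 * csum M j0.
  move=> M hM i0 j0.
  rewrite !mulr1 mulrACA; apply: ler_pM; try (by apply: mulr_ge0; apply: ltW).
    by case: (hM i0).
  by case: (hM j0).
have hPi := fun i0 j0 => cinv L0 (lowP K hS i0 j0) (lowP K' hS' i0 j0) (close_diff (hP i0 j0)).
have hA := fun i0 j0 => close_rw (cmul (hKc i0 j0) (hPi i0 j0)) (AmatE K i0 j0) (AmatE K' i0 j0).
have ha := fun i0 => csum_close (fun j0 => hA i0 j0).
lazymatch type of ha with forall _, clos _ (_ * _ * ?s) _ _ => pose sa := s end.
have Es : 1 * sa = n%:R^-1 by rewrite /sa; field.
have L1 : 0 < 1 * sa by rewrite Es invr_gt0.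
have lowa : forall (M : 'M[R]_n), (forall i0, n%:R^-1 <= rsum (Amat M) i0) ->
     forall i0, 1 * sa <= rsum (Amat M) i0 by move=> M hM i0; rewrite Es; exact: hM.
have hai := fun i0 => cinv L1 (lowa K aK i0) (lowa K' aK' i0) (close_diff (ha i0)).
have hZ := fun i0 j0 => close_rw (cmul (hA i0 j0) (hai i0)) (ZmatE K i0 j0) (ZmatE K' i0 j0).
have hL := fun k => csum_close (fun j0 => hZ j0 k).
lazymatch type of hL with forall _, clos _ (_ * _ * ?s) _ _ => pose sL := s end.
have Es2 : c * sL = c by rewrite /sL /sa; field.
have L2 : 0 < c * sL by rewrite Es2.
have lowL : forall (M : 'M[R]_n), (forall k, c <= csum (Zmat M) k) ->
     forall k, c * sL <= csum (Zmat M) k by move=> M hM k; rewrite Es2; exact: hM.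
have hLi := fun k => cinv L2 (lowL K LK k) (lowL K' LK' k) (close_diff (hL k)).
have hT := fun k => cmul (cmul (hZ i k) (hLi k)) (hZ j k).
have hF := close_diff (csum_close hT).
have Z0 : forall (M : 'M[R]_n), (forall k, c <= csum (Zmat M) k) -> forall k, csum (Zmat M) k != 0.
  by move=> M hM k; rewrite gt_eqF // (lt_le_trans c0 (hM k)).
rewrite (ZLZ_E (Z0 K LK)) (ZLZ_E (Z0 K' LK')).
apply: (le_trans hF).
by apply: fin_step; rewrite /sL /sa; field.
Qed.
End Pert2.

Section Kern.
Variable R : realType.

Lemma ff_anti (e a b : R) : 0 < e -> 0 <= a -> a <= b -> ff e b <= ff e a.
Proof.
move=> e0 a0 ab.
rewrite /ff ler_expR ler_pM2r ?invr_gt0 ?mulr_gt0 ?exprn_gt0 // lerN2.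
by rewrite ler_sqr // nnegrE (le_trans a0 ab).
Qed.

Lemma kdiff (eps eta e2 : R) p (x y z : 'rV[R]_p) : 0 < eps -> 0 < eta ->
  eucl_dist y z <= e2 ->
  `|gkern eps x y - gkern_trunc eps eta x z| <= ff eps eta + e2 / eps.
Proof.
move=> e0 eta0 hyz.
have hab := dist_diff x y z.
have a0 := dist_ge0 x y.
have b0 := dist_ge0 x z.
have lip : `|ff eps (eucl_dist x y) - ff eps (eucl_dist x z)| <= e2 / eps.
  apply: (le_trans (ff_lip e0 a0 b0)).
  rewrite ler_pM2r ?invr_gt0 // distrC.
  exact: le_trans hab hyz.
have fe0 := ff_gt0 eps eta.
rewrite /gkern_trunc; case: ifP => hb.
  have : gkern eps x y = ff eps (eucl_dist x y) by [].
  have : gkern eps x z = ff eps (eucl_dist x z) by [].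
  move=> -> ->; lra.
have etab : eta <= eucl_dist x z by rewrite leNgt hb.
have mono := ff_anti e0 (ltW eta0) etab.
rewrite subr0 ger0_norm; last exact: ltW (ff_gt0 _ _).
have : gkern eps x y = ff eps (eucl_dist x y) by [].
move=> ->.
have := ler_norm (ff eps (eucl_dist x y) - ff eps (eucl_dist x z)).
lra.
Qed.

End Kern.

Unset Implicit Arguments.
End Aux.
Import Aux.

Theorem lemma2 (R : realType) (p : nat) (eps : R) (eps_gt0 : 0 < eps)
  (x : forall n : nat, 'I_n -> 'rV[R]_p)
  (s : nat -> nat)
  (ind : forall n : nat, 'I_(s n) -> 'I_n)
  (tau : forall n : nat, 'I_n -> 'I_(s n))
  (tau_nearest : forall (n : nat) (i : 'I_n) (j : 'I_(s n)),
     eucl_dist (x n i) (x n (ind n (tau n i))) <= eucl_dist (x n i) (x n (ind n j)))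
  (eta1 : nat -> R) (eta1_gt0 : forall n, 0 < eta1 n)
  (c1 : R) (c1_gt0 : 0 < c1) (c1_lt1 : c1 < 1)
  (hK : forall (n : nat), (0 < n)%N -> forall i : 'I_n,
     [/\ c1 * n%:R <= rsum (Kbar eps (x n)) i,
         c1 * n%:R <= csum (Kbar eps (x n)) i,
         c1 * n%:R <= rsum (Ktil eps (eta1 n) (x n) (fun j => x n (ind n j)) (tau n)) i
       & c1 * n%:R <= csum (Ktil eps (eta1 n) (x n) (fun j => x n (ind n j)) (tau n)) i]) :
  exists C1 : R, forall n : nat, (0 < n)%N ->
    spec_norm (ZLZ (Kbar eps (x n))
               - ZLZ (Ktil eps (eta1 n) (x n) (fun j => x n (ind n j)) (tau n)))
    <= C1 * (expR (- (eta1 n) ^+ 2 / (4 * eps ^+ 2))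
             + eta2 (x n) (fun j => x n (ind n j)) (tau n) / eps).
Proof.
have [C hC] := pert c1_gt0.
exists C => n n0.
set K := Kbar eps (x n).
set K' := Ktil eps (eta1 n) (x n) (fun j => x n (ind n j)) (tau n).
set e2 := eta2 (x n) (fun j => x n (ind n j)) (tau n).
set d := expR (- (eta1 n) ^+ 2 / (4 * eps ^+ 2)) + e2 / eps.
have e20 : 0 <= e2.
  by rewrite /e2 /eta2; apply: bigmax_ge_id.
have d0 : 0 <= d.
  apply: addr_ge0; first exact: ltW (expR_gt0 _).
  by apply: mulr_ge0 => //; rewrite invr_ge0 ltW.
have gK : goodK K c1.
  split.
    move=> i j; rewrite /K mxE; apply/andP; split; first exact: ltW (ff_gt0 _ _).
    exact: ff_le1.
  by move=> i; case: (hK n n0 i).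
have gK' : goodK K' c1.
  split.
    move=> i j; rewrite /K' mxE /gkern_trunc; case: ifP => _; last by rewrite lexx ler01.
    apply/andP; split; first exact: ltW (ff_gt0 _ _).
    exact: ff_le1.
  by move=> i; case: (hK n n0 i).
have hd : forall i j, `|K i j - K' i j| <= d.
  move=> i j; rewrite /K /K' !mxE.
  apply: kdiff => //.
  rewrite /e2 /eta2.
  exact: (le_bigmax _ (fun i0 => eucl_dist (x n i0) (x n (ind n (tau n i0)))) j).
have := vnorm_bound (M := ZLZ K - ZLZ K') (m := C * d / n%:R).
move=> h; apply: le_trans (h _) _.
  move=> i j.
  have -> : (ZLZ K - ZLZ K') i j = ZLZ K i j - ZLZ K' i j by rewrite !mxE.
  exact: hC.
have NN : n%:R != 0 :> R by rewrite pnatr_eq0 -lt0n.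
by apply: eqle; field.
Qed.
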